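(* Let $P\ll Q$ be probability measures, $E$ measurable, $q:=Q(E)$, and $V:=\mathrm{VC}(P\Vert Q)$. Then $$P(E)\le\frac{V(1-q)+2q+\sqrt{V\big(V+8q(1-q)\big)}}{V+2}.$$
   Context: The Vincze–Le Cam divergence is the $f$-divergence $\mathrm{VC}(P\Vert Q):=D_f(P\Vert Q)=\int f(\mathrm dP/\mathrm dQ)\,\mathrm dQ$ with $f(t)=\frac{2-2t}{t+1}$ (equivalently $\int\frac{(\mathrm dP/\mathrm dQ-1)^2}{\mathrm dP/\mathrm dQ+1}\,\mathrm dQ$). *)

(* Defs.v *)
From HB Require Import structures.
From mathcomp Require Import all_boot all_order all_algebra.
From mathcomp Require Import all_classical all_reals all_analysis.
Set Implicit Arguments. Unset Strict Implicit. Unset Printing Implicit Defensive.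
Import Order.TTheory GRing.Theory Num.Theory.
Local Open Scope ring_scope.
Local Open Scope classical_set_scope.
Local Open Scope charge_scope.

Definition vc_gen (R : realType) (t : R) : R := (2 - 2 * t) / (t + 1).

(* f-divergence D_f(P||Q) = \int f(dP/dQ) dQ, where dP/dQ is the library's
   Radon--Nikodym derivative (real-valued when P << Q). *)
Definition f_div (d : measure_display) (T : measurableType d) (R : realType)
    (f : R -> R) (P Q : probability T R) : \bar R :=
  (\int[Q]_x (f (fine (('d (charge_of_finite_measure P) '/d Q) x)))%:E)%E.

Definition VC (d : measure_display) (T : measurableType d) (R : realType)
    (P Q : probability T R) : \bar R := f_div (@vc_gen R) P Q.

(* Main.v *)
Require Import Defs.
From HB Require Import structures.
From mathcomp Require Import all_boot all_order all_algebra.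
From mathcomp Require Import all_classical all_reals all_analysis.
From mathcomp Require Import measurable_realfun ring lra.
Import Order.TTheory GRing.Theory Num.Theory.
Local Open Scope ring_scope.
Local Open Scope classical_set_scope.

Lemma measurable_inv (R : realType) : measurable_fun [set: R] (@GRing.inv R).
Proof.
have -> : [set: R] = [set x | x != 0] `|` [set 0].
  apply/seteqP; split => x //= _; case: (eqVneq x 0) => [->|x0]; [right|left] => //.
apply/measurable_funU => //.
  apply: open_measurable; exact: open_neq.
split.
  apply: open_continuous_measurable_fun; first exact: open_neq.
  by move=> x; rewrite inE /= => x0; exact: inv_continuous.
move=> _ Y mY.
have [Y0|Y0] := pselect (Y 0^-1).
  rewrite (_ : _ `&` _ = [set 0]) //.
  by apply/seteqP; split => x /= ; [case|move=> ->].
rewrite (_ : _ `&` _ = set0) //.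
by apply/seteqP; split => x //= [->].
Qed.

Lemma measurable_vc_gen (R : realType) : measurable_fun [set: R] (@vc_gen R).
Proof.
rewrite /vc_gen; apply: measurable_funM.
  apply: measurable_funB => //; apply: measurable_funM => //.
apply: measurableT_comp; first exact: measurable_inv.
exact: measurable_funD.
Qed.

Lemma vc_gen_bound {R : realType} {t : R} : 0 <= t -> - 2 <= vc_gen t <= 2.
Proof.
move=> t0; rewrite /vc_gen; have t1 : 0 < t + 1 by lra.
rewrite ler_pdivlMr // ler_pdivrMr //; apply/andP; split; lra.
Qed.

Lemma vc_gen_tangent {R : realType} {t : R} (k : R) : 0 <= t ->
  8 * k - 4 * k ^+ 2 * (1 + t) - 2 <= vc_gen t.
Proof.
move=> t0; rewrite /vc_gen; have t1 : 0 < t + 1 by lra.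
rewrite ler_pdivlMr //.
have : 0 <= (k * (t + 1) - 1) ^+ 2 by exact: sqr_ge0.
rewrite !expr2; nra.
Qed.

Lemma real_core (R : realType) (p q A B : R) :
  0 <= p -> p <= 1 -> 0 <= q -> q <= 1 ->
  (forall k, 8 * k * q - 4 * k ^+ 2 * (q + p) <= A) ->
  (forall k, 8 * k * (1 - q) - 4 * k ^+ 2 * ((1 - q) + (1 - p)) <= B) ->
  forall V, V = A + B - 2 ->
  p <= (V * (1 - q) + 2 * q + Num.sqrt (V * (V + 8 * q * (1 - q)))) / (V + 2).
Proof.
move=> p0 p1 q0 q1 HA HB V0 ->.
set V := A + B - 2.
have A0 : 0 <= A by have := HA 0; lra.
have B0 : 0 <= B by have := HB 0; lra.
have HAs : 4 * q ^+ 2 <= A * (q + p).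
  have [s0|s0] := eqVneq (q + p) 0.
    have q00 : q = 0 by lra.
    by rewrite s0 q00 expr2; nra.
  have sp : 0 < q + p by rewrite lt0r s0 /=; lra.
  have := HA (q / (q + p)).
  rewrite -(ler_pM2r sp) => H; apply: le_trans H.
  rewrite [X in _ <= X](_ : _ = 4 * q ^+ 2) //; field; by rewrite s0.
have HBs : 4 * (1 - q) ^+ 2 <= B * ((1 - q) + (1 - p)).
  have [s1|s1] := eqVneq ((1 - q) + (1 - p)) 0.
    have q00 : 1 - q = 0 by lra.
    by rewrite s1 q00 expr2; nra.
  have sp1 : 0 < (1 - q) + (1 - p) by rewrite lt0r s1 /=; lra.
  have := HB ((1 - q) / ((1 - q) + (1 - p))).
  rewrite -(ler_pM2r sp1) => H; apply: le_trans H.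
  rewrite [X in _ <= X](_ : _ = 4 * (1 - q) ^+ 2) //; field; by rewrite s1.
have W0 : 0 < V + 2.
  rewrite /V; suff : 0 < A + B by lra.
  rewrite lt_neqAle addr_ge0 // andbT; apply/negP => /eqP AB.
  have A00 : A = 0 by lra.
  have B00 : B = 0 by lra.
  move: HAs HBs; rewrite A00 B00 !mul0r !expr2 => HA2 HB2; nra.
set W := V + 2.
set s := q + p.
have s2 : 0 <= 2 - s by rewrite /s; lra.
have sge : 0 <= s by rewrite /s; lra.
have h1 : 4 * q ^+ 2 * (2 - s) <= A * (q + p) * (2 - s) by apply: ler_wpM2r.
have h2 : 4 * (1 - q) ^+ 2 * s <= B * ((1 - q) + (1 - p)) * s by apply: ler_wpM2r.
have HQ : W * s ^+ 2 - 2 * (V + 4 * q) * s + 8 * q ^+ 2 <= 0.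
  move: h1 h2; rewrite /W /V /s !expr2 => h1 h2; lra.
have Hq' : (W * s - (V + 4 * q)) ^+ 2 <= V * (V + 8 * q * (1 - q)).
  have -> : (W * s - (V + 4 * q)) ^+ 2 = V * (V + 8 * q * (1 - q)) +
     W * (W * s ^+ 2 - 2 * (V + 4 * q) * s + 8 * q ^+ 2).
    by rewrite /W; ring.
  rewrite -[leRHS]addr0 lerD2l; apply: mulr_ge0_le0 => //; exact: ltW.
have Hx : W * s - (V + 4 * q) <= Num.sqrt (V * (V + 8 * q * (1 - q))).
  apply: le_trans (ler_norm _) _.
  rewrite -sqrtr_sqr; exact: ler_wsqrtr.
rewrite ler_pdivlMr //; rewrite /s /W in Hx *; lra.
Qed.

Theorem mainTheorem19 (d : measure_display) (T : measurableType d)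
    (R : realType) (P Q : probability T R) (E : set T) :
  P `<< Q -> measurable E ->
  let q := fine (Q E) in
  let V := fine (VC P Q) in
  fine (P E) <= (V * (1 - q) + 2 * q + Num.sqrt (V * (V + 8 * q * (1 - q))))
                / (V + 2).
Proof.
move=> PQ mE.
set F := Radon_Nikodym_SigmaFinite.f P Q.
have F0 : forall x, (0 <= F x)%E := Radon_Nikodym_SigmaFinite.f_ge0 PQ.
have Ffin : forall x, F x \is a fin_num := Radon_Nikodym_SigmaFinite.f_fin_num PQ.
have Fint : Q.-integrable setT F := Radon_Nikodym_SigmaFinite.f_integrable PQ.
have FP : forall A, measurable A -> P A = (\int[Q]_(x in A) F x)%E :=
  Radon_Nikodym_SigmaFinite.f_integral PQ.
have Hae := ae_eq_Radon_Nikodym_SigmaFinite PQ measurableT.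
pose g x := fine (F x).
have g0 : forall x, 0 <= g x by move=> x; rewrite /g fine_ge0.
have FE : F = EFin \o g by apply/funext => x /=; rewrite /g fineK.
have mF : measurable_fun setT F := measurable_int Q Fint.
have mg : measurable_fun setT g by apply: measurableT_comp.
pose phi x := vc_gen (g x).
have mphi : measurable_fun setT phi := measurableT_comp (measurable_vc_gen R) mg.
have Qfin : forall A, measurable A -> (Q A < +oo)%E.
  by move=> A mA; apply: (le_lt_trans (probability_le1 Q mA)); exact: ltey.
have intphi : forall A, measurable A -> Q.-integrable A (EFin \o phi).
  move=> A mA; apply: measurable_bounded_integrable => //.
  - exact: Qfin.
  - by apply: measurable_funS mphi.
  - exists 2; split => // M /= M2 x _.
  have := vc_gen_bound (g0 x); rewrite /phi => /andP[h1 h2].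
  rewrite ler_norml; apply/andP; split; lra.
have intg : forall A, measurable A -> Q.-integrable A (EFin \o g).
  by move=> A mA; rewrite -FE; exact: integrableS Fint.
have HV : fine (VC P Q) = Rintegral Q setT phi.
  rewrite /VC /f_div /Rintegral; congr fine; apply: ae_eq_integral => //.
  - apply/measurable_EFinP; apply: measurableT_comp; first exact: measurable_vc_gen.
    apply: measurableT_comp => //.
  - exact/measurable_EFinP.
  - move: Hae; apply: filterS => x H Tx.
    by rewrite /phi /g /F H.
have HPA : forall A, measurable A -> fine (P A) = Rintegral Q A g.
  by move=> A mA; rewrite FP // FE.
have intZ : forall A c, measurable A ->
    Q.-integrable A (EFin \o (fun x => c * g x)).
  move=> A c mA.
  rewrite (_ : _ \o _ = (fun x => c%:E * (EFin \o g) x)%E); last first.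
    by apply/funext => x /=; rewrite EFinM.
  by apply: integrableZl => //; exact: intg.
have key : forall A k, measurable A ->
    8 * k * fine (Q A) - 4 * k ^+ 2 * (fine (Q A) + fine (P A)) - 2 * fine (Q A)
    <= Rintegral Q A phi.
  move=> A k mA.
  have -> : 8 * k * fine (Q A) - 4 * k ^+ 2 * (fine (Q A) + fine (P A))
      - 2 * fine (Q A) =
      Rintegral Q A (fun x => (8 * k - 4 * k ^+ 2 - 2) - 4 * k ^+ 2 * g x).
    rewrite RintegralB //; last first.
    - exact: intZ.
    - exact: finite_measure_integrable_cst.
    rewrite Rintegral_cst // RintegralZl //; last exact: intg.
    rewrite HPA //. ring.
  apply: le_Rintegral => //.
  - set c := 8 * k - 4 * k ^+ 2 - 2.
    set c' := 4 * k ^+ 2.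
    have h2 := intZ A c' mA.
    rewrite (_ : _ \o _ = (EFin \o cst c) \- (EFin \o (fun x => c' * g x)%R))%E; last first.
      by apply/funext => x /=; rewrite EFinB.
    apply: integrableB => //; first exact: finite_measure_integrable_cst.
  - exact: intphi.
  - move=> x _; have := vc_gen_tangent k (g0 x); rewrite /phi; lra.
have HVs : fine (VC P Q) = Rintegral Q E phi + Rintegral Q (~` E) phi.
  rewrite HV -(setUv E) Rintegral_setU //.
  - exact: measurableC.
  - by rewrite setUv; exact: intphi.
  - exact/disj_setPCl.
have mEC : measurable (~` E) by exact: measurableC.
have finP : forall A, measurable A -> (P A) \is a fin_num.
  by move=> A mA; exact: fin_num_measure.
have finQ : forall A, measurable A -> (Q A) \is a fin_num.
  by move=> A mA; exact: fin_num_measure.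
have Pc : fine (P (~` E)) = 1 - fine (P E).
  by rewrite probability_setC // fineB // finP.
have Qc : fine (Q (~` E)) = 1 - fine (Q E).
  by rewrite probability_setC // fineB // finQ.
have p0 : 0 <= fine (P E) by exact: fine_ge0.
have q0 : 0 <= fine (Q E) by exact: fine_ge0.
have p1 : fine (P E) <= 1 by rewrite -lee_fin fineK ?finP //; exact: probability_le1.
have q1 : fine (Q E) <= 1 by rewrite -lee_fin fineK ?finQ //; exact: probability_le1.
have HA : forall k, 8 * k * fine (Q E) - 4 * k ^+ 2 * (fine (Q E) + fine (P E))
    <= Rintegral Q E phi + 2 * fine (Q E).
  by move=> k; have := key E k mE; lra.
have HB : forall k, 8 * k * (1 - fine (Q E)) - 4 * k ^+ 2 * ((1 - fine (Q E)) + (1 - fine (P E)))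
    <= Rintegral Q (~` E) phi + 2 * (1 - fine (Q E)).
  by move=> k; have := key (~` E) k mEC; rewrite Pc Qc; lra.
have := @real_core _ _ _ _ _ p0 p1 q0 q1 HA HB (fine (VC P Q)).
by apply; rewrite HVs; ring.
Qed.
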